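(* Let $A$ be a ring satisfying all of the following conditions: (1) every element of $A$ is nilpotent or regular; (2) $A$ has Krull dimension at most $1$; (3) for every ideal $I$ of $A$, if $\mathrm{Jac}_A I$ contains a regular element, then $I$ contains a regular element. Then $A$ is Jacobson. In particular, $\mathbb{Z}$ is Jacobson.
   Context: All rings are commutative with identity. The setting is constructive mathematics: no law of excluded middle and no Zorn's lemma, so ''or'' is a constructive disjunction. An element is regular if it is a non-zero-divisor. For a ring $A$ and a subset $U\subseteq A$, $\langle U\rangle_A$ denotes the ideal generated by $U$. Define $\mathrm{Nil}_A U:=\{a\in A:\exists n\ge 0,\ a^n\in\langle U\rangle_A\}$ and $\mathrm{Jac}_A U:=\{a\in A:\forall b\in A,\ 1\in\langle U\cup\{1-ab\}\rangle_A\}$. A ring $A$ is called Jacobson if every ideal $I$ of $A$ satisfies $\mathrm{Jac}_A I\subseteq \mathrm{Nil}_A I$. For $n\ge -1$, a ring $A$ has Krull dimension at most $n$ if for all $x_0,\dots,x_n\in A$ there exist $e_0,\dots,e_n\ge 0$ such that $x_0^{e_0}\cdots x_n^{e_n}\in\langle x_0^{e_0+1},\ x_0^{e_0}x_1^{e_1+1},\ \dots,\ x_0^{e_0}\cdots x_{n-1}^{e_{n-1}}x_n^{e_n+1}\rangle$. *)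

(* Defs.v *)
(* Rings: commutative rings with identity (possibly trivial),
   i.e. comPzRingType. Subsets and ideals are Prop-valued predicates (no
   decidability assumed; the setting is constructive). *)
From mathcomp Require Import all_boot all_algebra.
Set Implicit Arguments. Unset Strict Implicit. Unset Printing Implicit Defensive.
Import GRing.Theory.
Local Open Scope ring_scope.

Definition regular (A : comPzRingType) (a : A) : Prop :=
  forall b : A, a * b = 0 -> b = 0.

Definition nilpotent_el (A : comPzRingType) (a : A) : Prop :=
  exists n : nat, a ^+ n = 0.

Definition gen_ideal (A : comPzRingType) (U : A -> Prop) (a : A) : Prop :=
  exists (n : nat) (r u : 'I_n -> A),
    (forall i, U (u i)) /\ a = \sum_(i < n) r i * u i.

Definition is_ideal (A : comPzRingType) (I : A -> Prop) : Prop :=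
  [/\ I 0, (forall x y, I x -> I y -> I (x + y)) & (forall r x, I x -> I (r * x))].

Definition Nil (A : comPzRingType) (U : A -> Prop) (a : A) : Prop :=
  exists n : nat, gen_ideal U (a ^+ n).

Definition Jac (A : comPzRingType) (U : A -> Prop) (a : A) : Prop :=
  forall b : A, gen_ideal (fun x => U x \/ x = 1 - a * b) 1.

Definition Jacobson (A : comPzRingType) : Prop :=
  forall I : A -> Prop, is_ideal I -> forall a : A, Jac I a -> Nil I a.

(* Krull dimension at most n (n >= 0; index i ranges over 0..n):
   for all x_0..x_n there are e_0..e_n with
   x_0^e_0 ... x_n^e_n \in < x_0^e_0 ... x_(i-1)^e_(i-1) x_i^(e_i+1) | i <= n >. *)
Definition krull_dim_le (A : comPzRingType) (n : nat) : Prop :=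
  forall x : 'I_n.+1 -> A, exists e : 'I_n.+1 -> nat,
    gen_ideal
      (fun y => exists i : 'I_n.+1,
         y = (\prod_(j < n.+1 | (j < i)%N) x j ^+ e j) * x i ^+ (e i).+1)
      (\prod_(j < n.+1) x j ^+ e j).

(* Main.v *)
Require Import Defs.
From mathcomp Require Import all_boot all_algebra zify.
From Stdlib Require Import Classical.
Set Implicit Arguments. Unset Strict Implicit. Unset Printing Implicit Defensive.
Import GRing.Theory Num.Theory.
Local Open Scope ring_scope.
Lemma ideal_sum (A : comPzRingType) (I : A -> Prop) n (F : 'I_n -> A) :
  is_ideal I -> (forall i, I (F i)) -> I (\sum_(i < n) F i).
Proof.
case=> I0 ID _ HF; apply: (big_ind I) => //; exact: ID.
Qed.

Lemma gen_ideal_mul (A : comPzRingType) (I U : A -> Prop) (c x : A) :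
  is_ideal I -> (forall u, U u -> I (c * u)) -> gen_ideal U x -> I (c * x).
Proof.
move=> II HU [n [r [u [Hu ->]]]].
rewrite mulr_sumr; apply: ideal_sum => // i.
case: II => _ _ IM; rewrite mulrCA; apply: IM; exact: HU.
Qed.

Lemma gen_ideal_in (A : comPzRingType) (U : A -> Prop) (x : A) :
  U x -> gen_ideal U x.
Proof.
move=> Ux; exists 1%N, (fun _ => 1), (fun _ => x); split=> //.
by rewrite big_ord1 mul1r.
Qed.

Lemma regularX (A : comPzRingType) (r : A) n : regular r -> regular (r ^+ n).
Proof.
move=> Hr; elim: n => [|n IH] b; first by rewrite expr0 mul1r.
by rewrite exprS -mulrA => /Hr /IH.
Qed.

Lemma krull1P (A : comPzRingType) : krull_dim_le A 1 ->
  forall x0 x1 : A, exists e0 e1 s t,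
    x0 ^+ e0 * x1 ^+ e1 = s * x0 ^+ e0.+1 + t * (x0 ^+ e0 * x1 ^+ e1.+1).
Proof.
move=> HK x0 x1.
have [e He] := HK (fun i : 'I_2 => if val i == 0%N then x0 else x1).
exists (e ord0), (e ord_max).
pose J := fun y : A => exists s t,
    y = s * x0 ^+ (e ord0).+1 + t * (x0 ^+ (e ord0) * x1 ^+ (e ord_max).+1).
have IJ : is_ideal J.
  split.
  - by exists 0, 0; rewrite !mul0r addr0.
  - move=> x y [s [t ->]] [s' [t' ->]]; exists (s + s'), (t + t').
    by rewrite !mulrDl addrACA.
  - move=> r x [s [t ->]]; exists (r * s), (r * t).
    by rewrite mulrDr !mulrA.
have := gen_ideal_mul (c := 1) IJ _ He.
rewrite mul1r; case.
  move=> u [i ->]; rewrite mul1r.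
  case: i => [[|[|m]] Hm] //=.
  - exists 1, 0; rewrite mul0r addr0 mul1r.
    rewrite big_mkcond big_ord_recl big_ord1 /= !mul1r.
    by have -> : Ordinal Hm = ord0 by apply: val_inj.
  - exists 0, 1; rewrite mul0r add0r mul1r.
    rewrite big_mkcond big_ord_recl big_ord1 /= mulr1.
    have -> : Ordinal Hm = ord_max by apply: val_inj.
    done.
move=> s [t Ht]; exists s, t.
rewrite -Ht big_ord_recl big_ord1 /=.
have -> : lift ord0 ord0 = ord_max :> 'I_2 by apply: val_inj.
done.
Qed.
Lemma part1 (A : comPzRingType) :
     (forall a : A, nilpotent_el a \/ regular a) ->
     krull_dim_le A 1 ->
     (forall I : A -> Prop, is_ideal I ->
        (exists a : A, Jac I a /\ regular a) ->
        exists a : A, I a /\ regular a) ->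
     Jacobson A.
Proof.
move=> Hnr HK H3 I II a Ja.
have [I0 ID IM] := II.
case: (Hnr a) => [[n Hn]|Ra].
  by exists n; apply: gen_ideal_in; rewrite Hn.
have [r [Ir Rr]] := H3 I II (ex_intro _ a (conj Ja Ra)).
have [e0 [e1 [s [t Heq]]]] := krull1P HK r a.
have Ha : a ^+ e1 = s * r + t * a ^+ e1.+1.
  apply/eqP; rewrite -subr_eq0; apply/eqP; have RR := regularX (n:=e0) Rr; rewrite /regular in RR; apply: RR.
  rewrite mulrBr mulrDr [r ^+ e0 * (s * r)]mulrCA -exprSr.
  by rewrite [r ^+ e0 * (t * _)]mulrCA -Heq subrr.
exists e1; apply: gen_ideal_in.
rewrite -[a ^+ e1]mulr1; apply: (gen_ideal_mul II _ (Ja t)).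
move=> u [Iu|->]; first by exact: IM.
have -> : a ^+ e1 * (1 - a * t) = s * r.
  by rewrite mulrBr mulr1 mulrA -exprSr [_ ^+ _ * t]mulrC {1}Ha addrK.
exact: IM.
Qed.
Lemma krull1I (A : comPzRingType) :
  (forall x0 x1 : A, exists e0 e1 s t,
    x0 ^+ e0 * x1 ^+ e1 = s * x0 ^+ e0.+1 + t * (x0 ^+ e0 * x1 ^+ e1.+1)) ->
  krull_dim_le A 1.
Proof.
move=> H x.
have [e0 [e1 [s [t Heq]]]] := H (x ord0) (x ord_max).
have Emax : lift ord0 ord0 = ord_max :> 'I_2 by apply: val_inj.
exists (fun i : 'I_2 => if val i == 0%N then e0 else e1).
exists 2%N, (fun i : 'I_2 => if val i == 0%N then s else t).
eexists; split.
  move=> i; exists i; reflexivity.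
rewrite big_ord_recl big_ord1 /= Emax Heq.
rewrite big_ord_recl big_ord1 /=.
rewrite !big_mkcond !big_ord_recl !big_ord0 /= Emax.
rewrite !big_mkcond !big_ord_recl !big_ord0 /=. by rewrite !mulr1 !mul1r.
Qed.

Lemma gcd_stab (a b : nat) : (0 < a)%N ->
  exists k, gcdn a (b ^ k.+1) = gcdn a (b ^ k).
Proof.
move=> a0; pose g k := gcdn a (b ^ k).
have gpos k : (0 < g k)%N by rewrite gcdn_gt0 a0.
have key m : (forall k, (k < m)%N -> g k.+1 != g k) -> (2 ^ m <= g m)%N.
  elim: m => [|m IH] Hm; first by rewrite expn0.
  have := IH (fun k hk => Hm k (ltnW hk)).
  have Hd : (g m %| g m.+1)%N.
    rewrite dvdn_gcd dvdn_gcdl /=.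
    by apply: dvdn_trans (dvdn_gcdr _ _) _; rewrite expnS dvdn_mull.
  have Hne := Hm m (ltnSn m).
  case/dvdnP: Hd Hne => q Hq Hne.
  have q2 : (2 <= q)%N.
    case: q Hq Hne => [|[|q]] // Hq.
      by move: (gpos m.+1); rewrite Hq.
    by rewrite Hq mul1n eqxx.
  rewrite Hq expnS => h.
  by apply: leq_trans (leq_mul q2 h) _.
case: (boolP [exists k : 'I_a, g k.+1 == g k]).
  by case/existsP => k /eqP Hk; exists k.
rewrite negb_exists => /forallP Hall.
have := key a (fun k hk => Hall (Ordinal hk)).
have : (g a <= a)%N by apply: dvdn_leq => //; exact: dvdn_gcdl.
move=> h1 h2; have := leq_trans h2 h1.
by rewrite leqNgt ltn_expl.
Qed.

Lemma int_krull : krull_dim_le int 1.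
Proof.
apply: krull1I => x0 x1.
have [->|x0n] := eqVneq x0 0.
  by exists 1%N, 0%N, 0, 0; rewrite !mul0r addr0.
have x0p : (0 < `|x0|)%N by rewrite absz_gt0.
have [k Hk] := gcd_stab `|x1|%N x0p.
have [u [v Huv]] := Bezoutz x0 (x1 ^+ k.+1).
have : (gcdz x0 (x1 ^+ k.+1) %| x1 ^+ k)%Z.
  by rewrite dvdzE /gcdz absz_nat !abszX Hk dvdn_gcdr.
case/dvdzP => q Hq.
exists 0%N, k, (q * u), (q * v).
by rewrite expr0 expr1 !mul1r {1}Hq -Huv mulrDr !mulrA.
Qed.

Lemma int_nr (a : int) : nilpotent_el a \/ regular a.
Proof.
have [->|an] := eqVneq a 0; first by left; exists 1%N; rewrite expr1.
right => b /eqP; rewrite mulf_eq0 (negbTE an) /= => /eqP //.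
Qed.

Lemma int_cond3 (I : int -> Prop) : is_ideal I ->
  (exists a : int, Jac I a /\ regular a) -> exists a : int, I a /\ regular a.
Proof.
move=> II [a [Ja Ra]].
case: (classic (exists r, I r /\ r != 0)) => [[r [Ir rn]]|Hno].
  exists r; split => //; case: (int_nr r) => // [[n Hn]].
  by move: Hn => /eqP; rewrite expf_eq0 (negbTE rn) andbF.
exfalso.
have a0 : a != 0.
  apply/negP => /eqP a0; have := Ra 1; rewrite a0 mul0r => /(_ erefl) /eqP.
  by rewrite oner_eq0.
pose J := fun y : int => ((1 - a * 3) %| y)%Z.
have IJ : is_ideal J.
  split; rewrite /J.
  - exact: dvdz0.
  - by move=> x y hx hy; apply: rpredD.
  - by move=> r x hx; rewrite dvdz_mull.
have := gen_ideal_mul (c := 1) IJ _ (Ja 3).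
rewrite /J mul1r dvdz1 => /(_ _) H.
have : (`|(1 - a * 3)%R| == 1)%N.
  apply: H => u [Iu|->]; last by rewrite mul1r dvdzz.
  have -> : u = 0.
    apply: NNPP => hu; apply: Hno; exists u; split => //; exact/eqP.
  by rewrite mulr0 dvdz0.
move: a0; clear; lia.
Qed.

Lemma int_jacobson : Jacobson int.
Proof.
exact: (part1 int_nr int_krull int_cond3).
Qed.

Theorem mainTheorem12 :
  (forall A : comPzRingType,
     (forall a : A, nilpotent_el a \/ regular a) ->
     krull_dim_le A 1 ->
     (forall I : A -> Prop, is_ideal I ->
        (exists a : A, Jac I a /\ regular a) ->
        exists a : A, I a /\ regular a) ->
     Jacobson A)
  /\ Jacobson int.
Proof.
split; [exact: part1 | exact: int_jacobson].
Qed.
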